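(* Let $B=\mathrm{GF}(p^m)$ and $F=\mathrm{GF}(p^{mt})$ and assume $t$ is divisible by $p$. Let $\alpha^*\neq\overline{\alpha}$ be elements of $F$, and let $K_{\alpha^*,\overline{\alpha}}=\{z\in F:\mathrm{Tr}_{F/B}(z(\overline{\alpha}-\alpha^* ))=0\}$, a $B$-subspace of dimension $t-1$. Let $\{u_1,\dots,u_{t-1}\}$ and $\{v_1,\dots,v_{t-1}\}$ be two bases of $K_{\alpha^*,\overline{\alpha}}$ over $B$, completed to bases $\{u_1,\dots,u_t\}$ and $\{v_1,\dots,v_t\}$ of $F$ over $B$. For $i\in[t]$ set $p_i(x)=\dfrac{\mathrm{Tr}_{F/B}(u_i(x-\alpha^* ))}{x-\alpha^*}$ and $q_i(x)=\dfrac{\mathrm{Tr}_{F/B}(v_i(x-\overline{\alpha}))}{x-\overline{\alpha}}$. Then $p_t(\overline{\alpha})$ lies in the $B$-span of $\{q_i(\overline{\alpha}):i\in[t-1]\}$, and $q_t(\alpha^* )$ lies in the $B$-span of $\{p_i(\alpha^* ):i\in[t-1]\}$.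
   Context: $\mathrm{Tr}_{F/B}(x)=\sum_{i=0}^{t-1}x^{|B|^i}$ is the field trace; $[t]=\{1,\dots,t\}$. ''Dependent over $B$'' means lying in the $B$-linear span. *)

(* Defs.v *)
From HB Require Import structures.
From mathcomp Require Import all_boot all_order all_algebra all_field.
Set Implicit Arguments. Unset Strict Implicit. Unset Printing Implicit Defensive.
Import GRing.Theory.
Local Open Scope ring_scope.

(* B is a finite field, F a finite-dimensional field extension of B, so
   F = GF(|B|^t) with t = \dim {:F}.  Field trace as in the paper:
   Tr_{F/B}(x) = \sum_{i=0}^{t-1} x^{|B|^i}. *)
Definition trFB (B : finFieldType) (F : fieldExtType B) (x : F) : F :=
  \sum_(i < \dim {:F}) x ^+ (#|B| ^ i)%N.

Definition trpoly (B : finFieldType) (F : fieldExtType B) (a u : F) : {poly F} :=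
  \sum_(i < \dim {:F}) (u ^+ (#|B| ^ i)%N)%:P * ('X - a%:P) ^+ (#|B| ^ i)%N.

(* The polynomial p(X) = Tr_{F/B}(u (X - a)) / (X - a)  (exact polynomial
   division, since X = a is a root of the numerator); trquot a u x = p(x). *)
Definition trquot (B : finFieldType) (F : fieldExtType B) (a u x : F) : F :=
  (trpoly a u %/ ('X - a%:P)).[x].

Lemma trpolyE (B : finFieldType) (F : fieldExtType B) (a u x : F) :
  (trpoly a u).[x] = trFB (u * (x - a)).
Proof.
rewrite /trpoly /trFB horner_sum; apply: eq_bigr => i _.
by rewrite hornerM hornerC horner_exp hornerXsubC exprMn.
Qed.

(* Main.v *)
Require Import Defs.
From HB Require Import structures.
From mathcomp Require Import all_boot all_order all_algebra all_field.
Import GRing.Theory.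
Local Open Scope ring_scope.

Section Aux.
Variables (B : finFieldType) (F : fieldExtType B).
Local Notation q := #|B|.

Lemma q_gt1 : (1 < q)%N.
Proof. exact: finNzRing_gt1. Qed.

Definition Qp (a u : F) : {poly F} :=
  \sum_(i < \dim {:F}) (u ^+ (q ^ i)%N)%:P * ('X - a%:P) ^+ (q ^ i).-1.

Lemma trpoly_fact (a u : F) : trpoly a u = ('X - a%:P) * Qp a u.
Proof.
rewrite /trpoly /Qp mulr_sumr; apply: eq_bigr => i _.
rewrite mulrCA -exprS prednK // expn_gt0.
by have := q_gt1; case: (q).
Qed.

Lemma trquotE (a u x : F) : trquot a u x =
  \sum_(i < \dim {:F}) u ^+ (q ^ i)%N * (x - a) ^+ (q ^ i).-1.
Proof.
rewrite /trquot trpoly_fact mulKp ?polyXsubC_eq0 // /Qp horner_sum.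
by apply: eq_bigr => i _; rewrite hornerM hornerC horner_exp hornerXsubC.
Qed.

Lemma trquot_self (a u : F) : (0 < \dim {:F})%N -> trquot a u a = u.
Proof.
move=> hd; rewrite trquotE subrr.
case: (\dim {:F}) hd => // d _.
rewrite big_ord_recl /= expn0 expr1 expr0 mulr1 big1 ?addr0 // => i _.
rewrite expr0n /=.
have : (1 < q ^ (bump 0 i))%N.
  by rewrite -{1}(expn0 q) ltn_exp2l ?q_gt1.
by case: (q ^ _)%N => [|[|k]] //= _; rewrite mulr0.
Qed.

Lemma trquot_neq (a u x : F) : x != a ->
  trquot a u x = trFB (u * (x - a)) / (x - a).
Proof.
move=> hx; have hx' : x - a != 0 by rewrite subr_eq0.
rewrite -trpolyE trpoly_fact hornerM hornerXsubC /trquot trpoly_fact mulKp ?polyXsubC_eq0 //.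
by rewrite [X in X / _]mulrC mulfK.
Qed.

Variable p : nat.
Hypothesis hp : p \in [pchar B].

Lemma hpF : p \in [pchar F].
Proof. by rewrite (GRing.pchar_lalg F). Qed.

Lemma qnat i : ([pchar F]).-nat (q ^ i)%N.
Proof.
have h1 := pprimeChar_pgroup hp.
rewrite /pgroup.pgroup cardsT /= in h1.
rewrite pnatX (eq_pnat _ (pcharf_eq hpF)).
by apply/orP; left; exact: h1.
Qed.

Lemma frobD i (x y : F) : (x + y) ^+ (q ^ i)%N = x ^+ (q ^ i)%N + y ^+ (q ^ i)%N.
Proof. exact: GRing.exprDn_pchar (qnat i). Qed.

Lemma frob_sum (I : Type) (r : seq I) P (f : I -> F) :
  (\sum_(j <- r | P j) f j) ^+ q = \sum_(j <- r | P j) f j ^+ q.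
Proof.
apply: (big_morph (fun x => x ^+ q)).
  by move=> x y; have := frobD 1 x y; rewrite expn1.
by rewrite expr0n; have := q_gt1; case: (q).
Qed.

Lemma fermat (w : F) : w ^+ (q ^ \dim {:F})%N = w.
Proof.
have := Fermat's_little_theorem (fullv : {subfield F}) w.
by rewrite memvf => /esym/eqP.
Qed.

Lemma trFB_frob (w : F) : (trFB w) ^+ q = trFB w.
Proof.
rewrite /trFB frob_sum.
under eq_bigr => i _ do rewrite -exprM -expnSr.
case: (\dim {:F}) (fermat w) => [|d] hf; first by rewrite !big_ord0.
rewrite big_ord_recr big_ord_recl /= hf expn0 expr1 addrC.
by congr (_ + _); apply: eq_bigr => i _.
Qed.

Lemma trFB_fixed (c : F) : (p %| \dim {:F})%N -> c ^+ q = c -> trFB c = 0.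
Proof.
move=> hd hc.
have hci : forall i, c ^+ (q ^ i)%N = c.
  by elim=> [|i IH]; rewrite ?expn0 ?expr1 // expnSr exprM IH hc.
rewrite /trFB (eq_bigr (fun _ => c)) ?sumr_const ?card_ord; last by move=> i _; rewrite hci.
by rewrite -mulr_natr (eqP _ : (\dim {:F})%:R = 0 :> F) ?mulr0 // -(dvdn_pcharf hpF).
Qed.

Lemma frobN (c : F) : c ^+ q = c -> (- c) ^+ q = - c.
Proof.
move=> hc; apply/eqP; rewrite -addr_eq0.
have := frobD 1 c (- c); rewrite expn1 subrr expr0n.
move: hc; have := q_gt1; case: (q) => // k _ hc /=.
move/esym => h; rewrite addrC; apply/eqP; rewrite -[X in X + _]hc; exact: h.
Qed.

End Aux.
Theorem lemma7 (B : finFieldType) (F : fieldExtType B) (p n : nat)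
  (hp : p \in [pchar B]) (hdim : \dim {:F} = n.+1) (hdvd : (p %| n.+1)%N)
  (astar abar : F) (hneq : astar != abar)
  (K : {vspace F})
  (hK : forall z : F, (z \in K) = (trFB (z * (abar - astar)) == 0))
  (u v : 'I_n.+1 -> F)
  (huK : basis_of K [seq u (widen_ord (leqnSn n) i) | i : 'I_n])
  (hvK : basis_of K [seq v (widen_ord (leqnSn n) i) | i : 'I_n])
  (hu : basis_of fullv [seq u i | i : 'I_n.+1])
  (hv : basis_of fullv [seq v i | i : 'I_n.+1]) :
  trquot astar (u ord_max) abar
    \in <<[seq trquot abar (v (widen_ord (leqnSn n) i)) abar | i : 'I_n]>>%VS
  /\
  trquot abar (v ord_max) astar
    \in <<[seq trquot astar (u (widen_ord (leqnSn n) i)) astar | i : 'I_n]>>%VS.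
Proof.
have hd0 : (0 < \dim {:F})%N by rewrite hdim.
have hpd : (p %| \dim {:F})%N by rewrite hdim.
have hne1 : abar - astar != 0 by rewrite subr_eq0 eq_sym.
have hne2 : astar - abar != 0 by rewrite subr_eq0.
split.
  have -> : [seq trquot abar (v (widen_ord (leqnSn n) i)) abar | i : 'I_n] = [seq v (widen_ord (leqnSn n) i) | i : 'I_n].
    by apply: eq_map => i; exact: trquot_self.
  case/andP: hvK => /eqP -> _.
  have hneq' : abar != astar by rewrite eq_sym.
  rewrite hK (@trquot_neq B F astar (u ord_max) abar hneq') divfK //.
  by rewrite (@trFB_fixed B F p hp) // (@trFB_frob B F p hp).
have -> : [seq trquot astar (u (widen_ord (leqnSn n) i)) astar | i : 'I_n] = [seq u (widen_ord (leqnSn n) i) | i : 'I_n].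
  by apply: eq_map => i; exact: trquot_self.
case/andP: huK => /eqP -> _.
rewrite hK (@trquot_neq B F abar (v ord_max) astar hneq) -[abar - astar]opprB mulrN divfK //.
by rewrite (@trFB_fixed B F p hp) // (@frobN B F p hp) // (@trFB_frob B F p hp).
Qed.
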